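(* Let $X_1,X_2$, $A,B,C,D$, $X$, $\mathcal{A}$, $\mathcal{D}$ be as in the context with $L=0$, and assume $\overline{\mathsf{R}(A)}=X_1$ and $\overline{\mathsf{R}(D)}=X_2$. Then the operators $CA^{-1}:\mathsf{R}(A)\to X_2$, $Ax\mapsto Cx$, and $BD^{-1}:\mathsf{R}(D)\to X_1$, $Dy\mapsto By$, are well defined and extend uniquely to bounded operators $G=\overline{CA^{-1}}\in\mathscr{L}(X_1,X_2)$ and $H=\overline{BD^{-1}}\in\mathscr{L}(X_2,X_1)$. If one of the operators $I-HG$ and $I-GH$ is boundedly invertible, then $$\|\mathcal{D}x\|_X\lesssim\|\mathcal{A}x\|_X\quad\text{for all }x\in\mathsf{D}(\mathcal{D})=\mathsf{D}(\mathcal{A}).$$ In particular, if in addition $A$ and $D$ are sectorial, this estimate holds if for some $\varepsilon>0$ either $\sup\{\|B(t+D)^{-1}C(t+A)^{-1}\|:t\in(0,\varepsilon)\}<1$ or $\sup\{\|C(t+A)^{-1}B(t+D)^{-1}\|:t\in(0,\varepsilon)\}<1$.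
   Context: All Banach spaces are complex. A linear operator $T$ on a Banach space $Y$ is sectorial if there is $\omega\in(0,\pi)$ with $\sigma(T)\subseteq\{z\in\mathbb{C}:|\arg z|\le\omega\}\cup\{0\}$, $\overline{\mathsf{D}(T)}=\overline{\mathsf{R}(T)}=Y$ and $\sup_{|\arg\lambda|>\omega}\|\lambda(\lambda-T)^{-1}\|<\infty$. Setting: $X_1,X_2$ Banach spaces; $A$ on $X_1$ and $D$ on $X_2$ closed densely defined linear operators; $B:\mathsf{D}(B)\subseteq X_2\to X_1$, $C:\mathsf{D}(C)\subseteq X_1\to X_2$ linear with $\mathsf{D}(D)\subseteq\mathsf{D}(B)$, $\mathsf{D}(A)\subseteq\mathsf{D}(C)$ and constants $c_A,c_D\ge0$ with $\|Cx\|\le c_A\|Ax\|$ ($x\in\mathsf{D}(A)$), $\|By\|\le c_D\|Dy\|$ ($y\in\mathsf{D}(D)$) (this is the case $L=0$). $X=X_1\times X_2$, $\mathcal{A}=\begin{bmatrix}A&B\\C&D\end{bmatrix}$, $\mathcal{D}=\begin{bmatrix}A&0\\0&D\end{bmatrix}$, both with domain $\mathsf{D}(A)\times\mathsf{D}(D)$. *)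

(* Defs.v *)
From HB Require Import structures.
From mathcomp Require Import all_boot all_order all_algebra.
From mathcomp Require Import all_classical all_reals all_analysis.
From mathcomp Require Import complex.
Import Order.TTheory GRing.Theory Num.Theory numFieldNormedType.Exports.

Set Implicit Arguments.
Unset Strict Implicit.
Unset Printing Implicit Defensive.

Local Open Scope ring_scope.
Local Open Scope classical_set_scope.

(* A (possibly unbounded) linear operator  T : D(T) ⊆ V -> W  is represented
   by its domain  dom : set V  together with a total function  f : V -> W
   whose values outside  dom  are irrelevant. *)

Section OperatorDefs.
Context {K : numFieldType}.

Definition subspace {V : lmodType K} (dom : set V) : Prop :=
  dom 0 /\ forall (a : K) (x y : V), dom x -> dom y -> dom (a *: x + y).

Definition linear_on {V W : lmodType K} (dom : set V) (f : V -> W) : Prop :=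
  forall (a : K) (x y : V), dom x -> dom y -> f (a *: x + y) = a *: f x + f y.

Definition lin_op {V W : lmodType K} (dom : set V) (f : V -> W) : Prop :=
  subspace dom /\ linear_on dom f.

Definition closed_op {V W : normedModType K} (dom : set V) (f : V -> W) : Prop :=
  closed [set p : V * W | dom p.1 /\ f p.1 = p.2].

Definition densely_defined {V : normedModType K} (dom : set V) : Prop :=
  closure dom = setT.

Definition dense_range {V W : normedModType K} (dom : set V) (f : V -> W) : Prop :=
  closure (f @` dom) = setT.

Definition bounded_lin {V W : normedModType K} (g : V -> W) : Prop :=
  linear_on setT g /\ exists M : K, forall x, `|g x| <= M * `|x|.

Definition is_bounded_inverse {V W : normedModType K}
  (dom : set V) (f : V -> W) (g : W -> V) : Prop :=
  [/\ bounded_lin g,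
      (forall y, dom (g y)),
      (forall y, f (g y) = y) &
      (forall x, dom x -> g (f x) = x)].

Definition boundedly_invertible {V : normedModType K} (f : V -> V) : Prop :=
  exists g : V -> V, is_bounded_inverse setT f g.

End OperatorDefs.

Section Sectorial.
Context {R : realType}.

(* |arg z| for the principal argument arg z ∈ (-π, π], z ≠ 0:
   cos (arg z) = Re (z / |z|) and |arg z| ∈ [0, π]. *)
Definition abs_arg (z : R[i]) : R := acos (complex.Re (z / `|z|)).

(* sectorial operator (dom, T) on Y:  there is ω ∈ (0, π) such that
   σ(T) ⊆ {|arg z| ≤ ω} ∪ {0} (i.e. every λ ≠ 0 with |arg λ| > ω lies in the
   resolvent set: λ - T : D(T) -> Y has a bounded inverse),
   D(T) and R(T) are dense, and
   sup_{|arg λ| > ω} ‖λ (λ - T)^{-1}‖ < ∞. *)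
Definition sectorial {Y : normedModType R[i]} (dom : set Y) (T : Y -> Y) : Prop :=
  exists omega : R,
  [/\ 0 < omega < pi,
      (forall l : R[i], l != 0 -> omega < abs_arg l ->
         exists g, is_bounded_inverse dom (fun x => l *: x - T x) g),
      densely_defined dom,
      dense_range dom T &
      exists M : R, forall l : R[i], l != 0 -> omega < abs_arg l ->
         forall g, is_bounded_inverse dom (fun x => l *: x - T x) g ->
         forall y, `|l *: g y| <= (M%:C)%C * `|y| ].

End Sectorial.

(* Main.v *)
Set Warnings "-notation-overridden,-ambiguous-paths,-notation-incompatible-prefix".
Require Import Defs.
From HB Require Import structures.
From mathcomp Require Import all_boot all_order all_algebra.
From mathcomp Require Import all_classical all_reals all_analysis.
From mathcomp Require Import complex.
From mathcomp Require Import ring lra.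
Import Order.TTheory GRing.Theory Num.Theory numFieldNormedType.Exports.
Local Open Scope ring_scope.
Local Open Scope classical_set_scope.
Local Open Scope complex_scope.

Section Basic.
Context {R : realType}.

Lemma ge0_RC (z : R[i]) : 0 <= z -> z = (complex.Re z)%:C.
Proof. case: z => a b; rewrite lecE /= => /andP[/eqP -> _]. by []. Qed.

Context {V : normedModType R[i]}.
Definition nr (v : V) : R := complex.Re `|v|.
Lemma normE (v : V) : `|v| = (nr v)%:C.
Proof. exact/ge0_RC/normr_ge0. Qed.
Lemma nr_ge0 v : 0 <= nr v.
Proof. by rewrite -ler0c -normE. Qed.
Lemma nr0 : nr 0 = 0.
Proof. by rewrite /nr normr0. Qed.
Lemma nr_eq0 v : nr v = 0 -> v = 0.
Proof. move=> h; apply/eqP; rewrite -normr_eq0 normE h //. Qed.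
Lemma nrD x y : nr (x + y) <= nr x + nr y.
Proof. by rewrite -lecR rmorphD /= -!normE ler_normD. Qed.
Lemma nrN x : nr (- x) = nr x.
Proof. by rewrite /nr normrN. Qed.
Lemma nrZ (a : R[i]) x : nr (a *: x) = complex.Re `|a| * nr x.
Proof. apply: complexI; rewrite rmorphM /= -normE normrZ -ge0_RC // normE. Qed.
Lemma nrB x y : nr (x - y) = nr (y - x).
Proof. by rewrite -nrN opprB. Qed.
End Basic.
Lemma maxC_ (R : realType) (a b : R) : Num.max a%:C b%:C = (Num.max a b)%:C.
Proof. rewrite /Num.max /Order.max ltcR. by case: ifP. Qed.
Section Conv.
Context {R : realType}.
Definition conv0 (a : nat -> R) :=
  forall e, 0 < e -> exists N, forall n, (N <= n)%N -> a n < e.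

Lemma inv_small (e : R) : 0 < e -> exists N, forall n, (N <= n)%N -> (n.+1%:R)^-1 < e.
Proof.
move=> e0; exists (Num.Def.archi_bound e^-1) => n hn.
have h := @archi_boundP _ e^-1 (ltac:(by rewrite invr_ge0 ltW)).
have h2 : e^-1 < n.+1%:R.
  apply: (lt_le_trans h); rewrite ler_nat; exact: (leq_trans hn).
rewrite -(invrK e) ltf_pV2 // ?posrE ?invr_gt0 //.
Qed.

Lemma conv0_inv : conv0 (fun n => (n.+1%:R)^-1).
Proof. move=> e e0; exact: inv_small. Qed.

Lemma conv0_add a b : conv0 a -> conv0 b -> conv0 (fun n => a n + b n).
Proof.
move=> ha hb e e0.
have e2 : 0 < e / 2 by rewrite divr_gt0.
have [N1 h1] := ha _ e2; have [N2 h2] := hb _ e2.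
exists (maxn N1 N2) => n hn.
have := h1 n (leq_trans (leq_maxl _ _) hn); have := h2 n (leq_trans (leq_maxr _ _) hn).
lra.
Qed.

Lemma conv0_scale c a : 0 <= c -> conv0 a -> conv0 (fun n => c * a n).
Proof.
move=> c0 ha e e0.
have e2 : 0 < e / (c + 1) by rewrite divr_gt0 // ltr_wpDl.
have [N h] := ha _ e2; exists N => n hn.
have := h n hn => hl.
have : c * a n <= c * (e / (c + 1)) by rewrite ler_wpM2l // ltW.
have : c * (e / (c + 1)) < e.
  rewrite mulrA ltr_pdivrMr ?ltr_wpDl //; nra.
lra.
Qed.

Lemma conv0_le a b : (forall n, b n <= a n) -> conv0 a -> conv0 b.
Proof. move=> hab ha e e0; have [N h] := ha _ e0; exists N => n hn.
exact: (le_lt_trans (hab n) (h n hn)). Qed.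

Lemma conv0_0 : conv0 (fun _ => 0).
Proof. by move=> e e0; exists 0%N. Qed.

Lemma le0_of_conv0 (x : R) b : (forall n, x <= b n) -> conv0 b -> x <= 0.
Proof.
move=> hx hb; rewrite leNgt; apply/negP => x0.
have [N h] := hb _ x0; have := h N (leqnn N); have := hx N; lra.
Qed.

Lemma le_of_small (a b k eps : R) : 0 < eps -> 0 <= k ->
  (forall t, 0 < t < eps -> a <= b + t * k) -> a <= b.
Proof.
move=> e0 k0 h; rewrite leNgt; apply/negP => ab.
pose t := Num.min (eps / 2) ((a - b) / (2 * (k + 1))).
have t0 : 0 < t by rewrite lt_min !divr_gt0 // ?subr_gt0 // mulr_gt0 // ltr_wpDl.
have te : t < eps by rewrite gt_min; apply/orP; left; rewrite ltr_pdivrMr //; lra.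
have tk : t <= (a - b) / (2 * (k + 1)) by rewrite ge_min lexx orbT.
have := h t; rewrite t0 te => /(_ isT) => hh.
have : t * (2 * (k + 1)) <= a - b by rewrite -ler_pdivlMr // mulr_gt0 // ltr_wpDl.
nra.
Qed.
End Conv.
Arguments conv0_scale {R c a}.
Arguments conv0_le {R a b}.
Arguments conv0_add {R a b}.
Arguments le0_of_conv0 {R x b}.
Lemma Re_ge0 {R : realType} (z : R[i]) : 0 <= z -> 0 <= complex.Re z.
Proof. by case: z => a b; rewrite lecE /= => /andP[_]. Qed.
Lemma Re_gt0 {R : realType} (z : R[i]) : 0 < z -> 0 < complex.Re z.
Proof. by case: z => a b; rewrite ltcE /= => /andP[_]. Qed.

Section ConvV.
Context {R : realType} {V : normedModType R[i]}.
Definition conv (u : nat -> V) (l : V) := conv0 (fun n => nr (u n - l)).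

Lemma conv_unique u l m : conv u l -> conv u m -> l = m.
Proof.
move=> hl hm; apply/eqP; rewrite -subr_eq0; apply/eqP/nr_eq0.
apply/le_anti; rewrite nr_ge0 andbT.
apply: (@le0_of_conv0 _ _ (fun n => nr (u n - m) + nr (u n - l))); last exact: conv0_add.
move=> n; have -> : l - m = (u n - m) - (u n - l) by rewrite opprB addrCA addrAC subrr add0r.
by apply: (le_trans (nrD _ _)); rewrite nrN.
Qed.

Lemma conv_const l : conv (fun _ => l) l.
Proof. apply: (@conv0_le _ (fun _ => 0)); last exact: conv0_0. by move=> n /=; rewrite subrr nr0. Qed.

Lemma conv_lin (a : R[i]) u v l m : conv u l -> conv v m ->
  conv (fun n => a *: u n + v n) (a *: l + m).
Proof.
move=> hu hv.
have := conv0_add (conv0_scale (Re_ge0 _ (normr_ge0 a)) hu) hv.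
apply: conv0_le => n /=.
have -> : a *: u n + v n - (a *: l + m) = a *: (u n - l) + (v n - m).
  by rewrite scalerBr opprD !addrA; congr (_ + _); rewrite -!addrA; congr (_ + _); rewrite addrC.
by apply: (le_trans (nrD _ _)); rewrite nrZ.
Qed.
End ConvV.

Lemma conv_complete (R : realType) (Y : completeNormedModType R[i]) (u : nat -> Y) :
  (forall e : R, 0 < e -> exists N, forall n, (N <= n)%N -> nr (u n - u N) < e) ->
  exists l, conv u l.
Proof.
move=> hc.
have cu : cauchy_ex (u @ \oo).
  move=> eps eps0.
  have [N hN] := hc _ (Re_gt0 _ eps0).
  exists (u N); exists N => // n /= hn.
  rewrite -ball_normE /ball_ /= normE (ge0_RC _ (ltW eps0)) ltcR nrB.
  exact: hN.
have hcau : cauchy (u @ \oo) by apply: cauchy_exP.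
have hcv : cvg (u @ \oo) by apply: cauchy_cvg.
exists (lim (u @ \oo)) => e e0.
have e0' : 0 < e%:C by rewrite ltcR.
have [N _ hN] := cvgr_dist_lt _ _ hcv _ e0'.
exists N => n hn; have := hN n hn; rewrite /= normE ltcR nrB //.
Qed.
Section Helpers.
Context {R : realType}.
Context {V W : normedModType R[i]}.

Lemma tri (x y z : V) : nr (x - z) <= nr (x - y) + nr (y - z).
Proof. have -> : x - z = (x - y) + (y - z) by rewrite addrA subrK. exact: nrD. Qed.

Lemma sub_sub {S : set V} {x y} : Defs.subspace S -> S x -> S y -> S (x - y).
Proof. rewrite /Defs.subspace => -[_ hS] Sx Sy; have := hS (-1) y x Sy Sx; by rewrite scaleN1r addrC. Qed.

Lemma lin_sub {S : set V} {f : V -> W} {x y} : linear_on S f -> S x -> S y ->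
  f (x - y) = f x - f y.
Proof. move=> hf Sx Sy; have := hf (-1) y x Sy Sx; rewrite !scaleN1r addrC => ->; by rewrite addrC. Qed.

Lemma lin0 {S : set V} {f : V -> W} : Defs.subspace S -> linear_on S f -> f 0 = 0.
Proof. rewrite /Defs.subspace => -[S0 _] hf; have := lin_sub hf S0 S0; by rewrite subrr => ->; rewrite subrr. Qed.

Lemma bl_real (g : V -> W) (M : R[i]) : (forall x, `|g x| <= M * `|x|) ->
  forall x, nr (g x) <= `|complex.Re M| * nr x.
Proof.
case: M => a b h x; have := h x; rewrite !normE.
rewrite lecE /= => /andP[_] hh.
have := ler_norm a; have := nr_ge0 x; nra.
Qed.

Lemma bl_real' (g : V -> W) : bounded_lin g ->
  exists M : R, 0 <= M /\ forall x, nr (g x) <= M * nr x.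
Proof. move=> [_ [M hM]]; exists `|complex.Re M|; split => //; exact: bl_real. Qed.

Lemma bl_of_real (g : V -> W) (M : R) : linear_on setT g ->
  (forall x, nr (g x) <= M * nr x) -> bounded_lin g.
Proof. move=> hl hM; split => //; exists M%:C => x; by rewrite !normE -rmorphM lecR. Qed.
End Helpers.

Lemma extension (R : realType) (X : normedModType R[i]) (Y : completeNormedModType R[i])
  (S : set X) (f : X -> Y) (c : R) :
  Defs.subspace S -> closure S = setT -> linear_on S f -> 0 <= c ->
  (forall x, S x -> nr (f x) <= c * nr x) ->
  exists G : X -> Y, [/\ bounded_lin G, (forall x, S x -> G x = f x) &
     forall G', bounded_lin G' -> (forall x, S x -> G' x = f x) -> G' = G].
Proof.
move=> hS hcl hf c0 hb.
have approx : forall p : X * nat, exists s, S s /\ nr (p.1 - s) < (p.2.+1%:R)^-1.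
  move=> [x n] /=.
  have : closure S x by rewrite hcl.
  have e0 : 0 < ((n.+1%:R : R)^-1)%:C by rewrite ltcR invr_gt0 ltr0Sn.
  move/(_ _ (nbhsx_ballx x _ e0)) => [s [Ss bs]].
  exists s; split => //.
  by move: bs; rewrite -ball_normE /ball_ /= normE ltcR.
have [sg hsg] := choice approx.
pose σ x n := sg (x, n).
have Sσ : forall x n, S (σ x n) by move=> x n; exact: (hsg (x, n)).1.
have convσ : forall x, conv (σ x) x.
  move=> x; apply: (conv0_le _ conv0_inv) => n /=; rewrite nrB.
  exact: ltW (hsg (x, n)).2.
have fcauchy : forall x, exists l, conv (fun n => f (σ x n)) l.
  move=> x; apply: conv_complete => e e0.
  have d0 : 0 < e / (2 * c + 1) by rewrite divr_gt0 // ltr_wpDl // mulr_ge0.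
  have [N hN] := inv_small _ d0.
  exists N => n hn.
  rewrite -(lin_sub hf (Sσ x n) (Sσ x N)).
  apply: (le_lt_trans (hb _ (sub_sub hS (Sσ x n) (Sσ x N)))).
  have h1 := tri (σ x n) x (σ x N).
  have h2 : nr (σ x n - x) < e / (2 * c + 1) by rewrite nrB; exact: lt_trans (hsg (x, n)).2 (hN n hn).
  have h3 : nr (x - σ x N) < e / (2 * c + 1) by exact: lt_trans (hsg (x, N)).2 (hN N (leqnn N)).
  have h4 : c * nr (σ x n - σ x N) <= c * (2 * (e / (2 * c + 1))).
    rewrite ler_wpM2l //; lra.
  apply: (le_lt_trans h4).
  rewrite mulrA mulrA ltr_pdivrMr ?ltr_wpDl ?mulr_ge0 //; nra.
have [G hG] := choice fcauchy.
have key : forall t x, (forall n, S (t n)) -> conv t x -> conv (fun n => f (t n)) (G x).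
  move=> t x St ht.
  have hb1 := conv0_add (conv0_scale c0 (conv0_add ht (convσ x))) (hG x).
  apply: (conv0_le _ hb1) => n /=.
  apply: (le_trans (tri _ (f (σ x n)) _)); rewrite lerD2r.
  rewrite -(lin_sub hf (St n) (Sσ x n)); apply: (le_trans (hb _ (sub_sub hS (St n) (Sσ x n)))).
  rewrite ler_wpM2l //; apply: (le_trans (tri _ x _)); by rewrite [nr (x - _)]nrB.
have GS : forall x, S x -> G x = f x.
  move=> x Sx; apply: (@conv_unique _ _ (fun n => f x)); last exact: conv_const.
  by apply: (key (fun _ => x)) => //; exact: conv_const.
have Glin : linear_on setT G.
  move=> a x y _ _; symmetry.
  apply: (@conv_unique _ _ (fun n => f (a *: σ x n + σ y n))).
    have -> : (fun n => f (a *: σ x n + σ y n)) = (fun n => a *: f (σ x n) + f (σ y n)).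
      by apply: funext => n; apply: hf.
    exact: conv_lin.
  apply: key; first by move=> n; apply: hS.2.
  exact: conv_lin.
have Gb : forall x, nr (G x) <= c * nr x.
  move=> x; rewrite -subr_le0.
  have hb1 := conv0_add (hG x) (conv0_scale c0 (convσ x)).
  apply: (le0_of_conv0 _ hb1) => n /=.
  have h1 := tri (G x) (f (σ x n)) 0; rewrite !subr0 in h1.
  have h2 := hb _ (Sσ x n).
  have h3 := tri (σ x n) x 0; rewrite !subr0 in h3.
  rewrite [nr (G x - _)]nrB in h1.
  have : c * nr (σ x n) <= c * (nr (σ x n - x) + nr x) by rewrite ler_wpM2l.
  lra.
exists G; split => //; first exact: (@bl_of_real _ _ _ G c Glin Gb).
move=> G' hG' G'S; apply: funext => x.
have [M [M0 hM]] := bl_real' _ hG'.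
have [lin' _] := hG'.
apply: (@conv_unique _ _ (fun n => f (σ x n))); last exact: hG.
have -> : (fun n => f (σ x n)) = (fun n => G' (σ x n)) by apply: funext => n; rewrite G'S.
apply: (conv0_le _ (conv0_scale M0 (convσ x))) => n /=.
rewrite -(lin_sub (S := setT)) //; exact: hM.
Qed.
Lemma normC_real {R : realType} (x : R) : `|x%:C| = `|x|%:C.
Proof. by rewrite normc_def /= expr0n /= addr0 sqrtr_sqr. Qed.

Lemma abs_arg_neg {R : realType} (t : R) : 0 < t -> abs_arg ((- t)%:C) = pi.
Proof.
move=> t0; rewrite /abs_arg normC_real normrN gtr0_norm //.
rewrite -fmorph_div mulNr divff ?gt_eqF //; exact: acosN1.
Qed.

Section Lin.
Context {R : realType} {V W : normedModType R[i]}.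
Lemma lin_add {S : set V} {f : V -> W} {x y} : linear_on S f -> S x -> S y ->
  f (x + y) = f x + f y.
Proof. move=> hf Sx Sy; by rewrite -[x]scale1r hf // !scale1r. Qed.
Lemma lin_opp {S : set V} {f : V -> W} {x} : Defs.subspace S -> linear_on S f -> S x ->
  f (- x) = - f x.
Proof.
move=> hS hf Sx; have S0 := hS.1.
by rewrite -[- x]add0r (lin_sub hf S0 Sx) (lin0 hS hf) add0r.
Qed.
Lemma sub_opp {S : set V} {x} : Defs.subspace S -> S x -> S (- x).
Proof. move=> hS Sx; rewrite -[- x]add0r; exact: sub_sub hS hS.1 Sx. Qed.
Lemma sub_scale {S : set V} {x} (a : R[i]) : Defs.subspace S -> S x -> S (a *: x).
Proof. move=> hS Sx; rewrite -[a *: x]addr0; exact: hS.2 _ _ _ Sx hS.1. Qed.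
Lemma lin_scale {S : set V} {f : V -> W} {x} (a : R[i]) : Defs.subspace S -> linear_on S f -> S x ->
  f (a *: x) = a *: f x.
Proof. move=> hS hf Sx; have := hf a x 0 Sx hS.1; rewrite addr0 => ->; by rewrite (lin0 hS hf) addr0. Qed.
End Lin.

Lemma setT_sub {R : realType} {V : normedModType R[i]} : Defs.subspace (@setT V).
Proof. by []. Qed.

Lemma nrZt {R : realType} {V : normedModType R[i]} (t : R) (x : V) : 0 <= t ->
  nr (t%:C *: x) = t * nr x.
Proof. move=> t0; by rewrite nrZ normC_real ger0_norm. Qed.

Lemma resolvent {R : realType} {Y : normedModType R[i]} (dom : set Y) (T : Y -> Y) :
  lin_op dom T -> sectorial dom T ->
  exists M : R, 0 <= M /\ forall t : R, 0 < t -> exists Rt,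
    is_bounded_inverse dom (fun x => t%:C *: x + T x) Rt /\
    forall y, t * nr (Rt y) <= M * nr y.
Proof.
move=> [hS hT] [om [oo hex _ _ [M hM]]]; move/andP: oo => [_ opi].
exists (Num.max M 0); split; first by rewrite le_max lexx orbT.
move=> t t0.
have l0 : (- t)%:C != 0.
  by apply/eqP => /(congr1 (@complex.Re R)) /= /eqP; rewrite oppr_eq0 gt_eqF.
have larg : om < abs_arg ((- t)%:C) by rewrite abs_arg_neg.
have [g hg] := hex _ l0 larg.
have [[glin [Mg hMg]] gdom gright gleft] := hg.
have g0 := lin0 setT_sub glin.
exists (fun y => - g y); split.
  split.
  - split.
      move=> a x y _ _ /=.
      by rewrite (lin_add glin) // (lin_scale _ setT_sub glin) // opprD scalerN.
    by exists Mg => x; rewrite normrN.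
  - by move=> y; apply: sub_opp.
  - move=> y /=; rewrite (lin_opp hS hT (gdom y)).
    have := gright y; rewrite rmorphN scaleNr => h.
    by rewrite scalerN.
  - move=> x dx /=.
    have -> : t%:C *: x + T x = - ((- t)%:C *: x - T x) by rewrite rmorphN scaleNr opprB opprK addrC.
    by rewrite (lin_opp setT_sub glin) // opprK gleft.
move=> y; rewrite nrN.
have := hM _ l0 larg g hg y.
rewrite !normE -rmorphM lecR nrZ normC_real /= normrN (ger0_norm (ltW t0)) => h.
apply: (le_trans h); apply: ler_wpM2r; [exact: nr_ge0 | by rewrite le_max lexx].
Qed.
Lemma vec2 (V : zmodType) (x y : V) : (x + y) - x = y.
Proof. by rewrite addrAC subrr add0r. Qed.
Lemma vec_id (V : zmodType) (u w a b : V) : u = (u + w) - (a + (b + w) - a - b).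
Proof. by rewrite vec2 vec2 addrK. Qed.

Lemma nr4 {R : realType} {V : normedModType R[i]} (p b a c : V) :
  nr (p - (b - a - c)) <= nr p + nr b + nr a + nr c.
Proof.
apply: (le_trans (nrD _ _)); rewrite nrN -!addrA lerD2l.
apply: (le_trans (nrD _ _)); rewrite lerD2l.
apply: (le_trans (nrD _ _)); by rewrite !nrN.
Qed.

Lemma p4 {R : realType} {X1 X2 : normedModType R[i]} (G : X1 -> X2) (H : X2 -> X1) :
  bounded_lin G -> bounded_lin H -> boundedly_invertible (fun x => x - H (G x)) ->
  exists K : R, 0 <= K /\ forall u v, nr u <= K * Num.max (nr (u + H v)) (nr (G u + v)).
Proof.
move=> hG hH [Phi [hPb _ _ hPhi]].
have [MH [MH0 hMH]] := bl_real' _ hH.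
have [MP [MP0 hMP]] := bl_real' _ hPb.
have Hlin := hH.1.
exists (MP * (1 + MH)); split; first by rewrite mulr_ge0 // addr_ge0.
move=> u v.
set P := Num.max _ _.
have hp : nr (u + H v) <= P by rewrite le_max lexx.
have hq : nr (G u + v) <= P by rewrite le_max lexx orbT.
have e : u = Phi ((u + H v) - H (G u + v)).
  rewrite (lin_add Hlin) // [H (G u) + _]addrC opprD addrA addrK.
  by rewrite hPhi.
rewrite e; apply: (le_trans (hMP _)).
have h1 := nrD (u + H v) (- H (G u + v)); rewrite nrN in h1.
have h2 := hMH (G u + v).
have h3 : MH * nr (G u + v) <= MH * P by rewrite ler_wpM2l.
have h4 : nr (u + H v - H (G u + v)) <= (1 + MH) * P by lra.
rewrite -mulrA ler_wpM2l //.
Qed.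

Lemma combine {R : realType} (a b P K c' nq : R) : 0 <= K -> 0 <= c' -> 0 <= nq ->
  a <= K * P -> b <= nq + c' * a -> nq <= P ->
  Num.max a b <= (K + 1 + c' * K) * P.
Proof.
move=> K0 c0 nq0 ha hb hq; rewrite ge_max.
have P0 : 0 <= P by lra.
have KP : 0 <= K * P by rewrite mulr_ge0.
have cKP : 0 <= c' * K * P by rewrite !mulr_ge0.
have hh1 : c' * a <= c' * (K * P) by rewrite ler_wpM2l.
have hh2 : (K + 1 + c' * K) * P = K * P + P + c' * K * P by ring.
have hh3 : c' * (K * P) = c' * K * P by ring.
apply/andP; split; lra.
Qed.

Lemma est_conv {R : realType} {X1 X2 : normedModType R[i]} (u p : X1) (v q : X2) (c : R) :
  Num.max (nr u) (nr v) <= c * Num.max (nr p) (nr q) ->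
  `|((u, v) : (X1 * X2)%type)| <= c%:C * `|((p, q) : (X1 * X2)%type)|.
Proof. by rewrite !prod_normE /= !normE !maxC_ -rmorphM lecR. Qed.

Lemma nrZnt {R : realType} {V : normedModType R[i]} (t : R) (x : V) : 0 <= t ->
  nr ((- t)%:C *: x) = t * nr x.
Proof. move=> t0; by rewrite nrZ normC_real normrN ger0_norm. Qed.

Lemma p5 {R : realType} {X1 X2 : normedModType R[i]} (dA : set X1) (A : X1 -> X1)
  (dD : set X2) (D : X2 -> X2) (dB : set X2) (B : X2 -> X1) (dC : set X1) (C : X1 -> X2)
  (cD MD eps q0 : R) :
  lin_op dA A -> lin_op dD D -> lin_op dB B -> lin_op dC C -> dD `<=` dB -> dA `<=` dC ->
  0 <= cD -> 0 <= MD ->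
  (forall y, dD y -> nr (B y) <= cD * nr (D y)) ->
  (forall t : R, 0 < t -> exists RA, is_bounded_inverse dA (fun x => t%:C *: x + A x) RA) ->
  (forall t : R, 0 < t -> exists RD, is_bounded_inverse dD (fun x => t%:C *: x + D x) RD /\
      forall y, t * nr (RD y) <= MD * nr y) ->
  0 < eps -> q0 < 1 ->
  (forall t : R, 0 < t < eps -> forall RA RD,
     is_bounded_inverse dA (fun x => t%:C *: x + A x) RA ->
     is_bounded_inverse dD (fun y => t%:C *: y + D y) RD ->
     forall x, nr (B (RD (C (RA x)))) <= q0 * nr x) ->
  exists K : R, 0 <= K /\ forall x1 x2, dA x1 -> dD x2 ->
    nr (A x1) <= K * Num.max (nr (A x1 + B x2)) (nr (C x1 + D x2)).
Proof.
move=> [hSA hA] [hSD hD] [hSB hB] [hSC hC] sDB sAC cD0 MD0 hBb hRA hRD e0 q1 hK.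
pose q := Num.max q0 0.
have q0' : 0 <= q by rewrite le_max lexx orbT.
have q1' : q < 1 by rewrite gt_max q1 ltr01.
have hK' : forall t : R, 0 < t < eps -> forall RA RD,
     is_bounded_inverse dA (fun x => t%:C *: x + A x) RA ->
     is_bounded_inverse dD (fun y => t%:C *: y + D y) RD ->
     forall x, nr (B (RD (C (RA x)))) <= q * nr x.
  move=> t ht RA RD h1 h2 x; apply: (le_trans (hK t ht RA RD h1 h2 x)).
  by apply: ler_wpM2r; [exact: nr_ge0 | rewrite le_max lexx].
pose L := cD * (1 + MD).
have L0 : 0 <= L by rewrite mulr_ge0 // addr_ge0.
exists ((1 + L) / (1 - q)); split.
  by apply: divr_ge0; [rewrite addr_ge0 | rewrite subr_ge0 ltW].
move=> x1 x2 d1 d2.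
set p := A x1 + B x2; set qq := C x1 + D x2.
have main : (1 - q) * nr (A x1) <= nr p + L * nr qq.
  have k0 : 0 <= q * nr x1 + L * nr x2 by rewrite addr_ge0 // mulr_ge0 // nr_ge0.
  apply: (le_of_small _ _ _ _ e0 k0) => t /andP[t0 te].
  have [RA hRA'] := hRA t t0; have [RD [hRD' hRDb]] := hRD t t0.
  have hKt := hK' t (ltac:(by rewrite t0 te)) RA RD hRA' hRD'.
  case: hRA' => [[RAlin _] RAdom RAr RAl]; case: hRD' => [[RDlin _] RDdom RDr RDl].
  have e1 : C x1 = C (RA (t%:C *: x1 + A x1)) by rewrite RAl.
  have e2 : B (RD qq) = B (RD (C x1)) + B (RD (D x2)).
    by rewrite /qq (lin_add RDlin) // (lin_add hB) //; apply: sDB; apply: RDdom.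
  have e3 : RD (D x2) = (- t)%:C *: RD x2 + x2.
    have := RDl x2 d2; rewrite (lin_add RDlin) // (lin_scale _ setT_sub RDlin) // => h.
    by rewrite -{3}h rmorphN scaleNr addrA addNr add0r.
  have e4 : B (RD (D x2)) = (- t)%:C *: B (RD x2) + B x2.
    by rewrite e3 hB //; [apply: sDB; apply: RDdom | apply: sDB].
  have e5 : A x1 = p - (B (RD qq) - B (RD (C x1)) - (- t)%:C *: B (RD x2)).
    by rewrite e2 e4 /p -vec_id.
  have h4 := nr4 p (B (RD qq)) (B (RD (C x1))) ((- t)%:C *: B (RD x2)).
  rewrite -e5 (nrZnt _ _ (ltW t0)) in h4.
  have h5 : nr (B (RD (C x1))) <= q * (t * nr x1 + nr (A x1)).
    rewrite e1; apply: (le_trans (hKt _)); rewrite ler_wpM2l //.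
    by apply: (le_trans (nrD _ _)); rewrite (nrZt _ _ (ltW t0)).
  have hDR : forall z, nr (D (RD z)) <= nr z + MD * nr z.
    move=> z; have h := RDr z.
    have -> : D (RD z) = z - t%:C *: RD z by rewrite -[X in _ = X - _]h vec2.
    apply: (le_trans (nrD _ _)); rewrite nrN (nrZt _ _ (ltW t0)) lerD2l; exact: hRDb.
  have h6 : nr (B (RD qq)) <= L * nr qq.
    apply: (le_trans (hBb _ (RDdom _))); rewrite /L -mulrA; apply: ler_wpM2l => //.
    rewrite mulrDl mul1r; exact: hDR.
  have h7 : t * nr (B (RD x2)) <= t * (L * nr x2).
    apply: ler_wpM2l; first exact: ltW.
    apply: (le_trans (hBb _ (RDdom _))); rewrite /L -mulrA; apply: ler_wpM2l => //.
    rewrite mulrDl mul1r; exact: hDR.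
  have h8 : q * (t * nr x1 + nr (A x1)) = t * (q * nr x1) + q * nr (A x1) by ring.
  have h9 : t * (q * nr x1 + L * nr x2) = t * (q * nr x1) + t * (L * nr x2) by ring.
  rewrite h9; lra.
have hp : nr p <= Num.max (nr p) (nr qq) by rewrite le_max lexx.
have hq : nr qq <= Num.max (nr p) (nr qq) by rewrite le_max lexx orbT.
have hq' : L * nr qq <= L * Num.max (nr p) (nr qq) by rewrite ler_wpM2l.
rewrite mulrAC ler_pdivlMr ?subr_gt0 //.
rewrite mulrC; lra.
Qed.
Lemma finish {R : realType} {X1 X2 : normedModType R[i]} (u p : X1) (v q w : X2) (K c' : R) :
  0 <= K -> 0 <= c' -> nr u <= K * Num.max (nr p) (nr q) -> v = q - w -> nr w <= c' * nr u ->
  Num.max (nr u) (nr v) <= (K + 1 + c' * K) * Num.max (nr p) (nr q).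
Proof.
move=> K0 c0 hu hv hw; apply: (@combine _ _ _ _ _ _ _ K0 c0 (nr_ge0 q) hu).
  rewrite hv; apply: (le_trans (nrD _ _)); by rewrite nrN lerD2l.
by rewrite le_max lexx orbT.
Qed.

Lemma finish' {R : realType} {X1 X2 : normedModType R[i]} (u p : X1) (v q : X2) (w : X1) (K c' : R) :
  0 <= K -> 0 <= c' -> nr v <= K * Num.max (nr q) (nr p) -> u = p - w -> nr w <= c' * nr v ->
  Num.max (nr u) (nr v) <= (K + 1 + c' * K) * Num.max (nr p) (nr q).
Proof.
move=> K0 c0 hv hu hw; rewrite maxC [Num.max (nr p) _]maxC.
exact: (@finish _ _ _ _ _ _ _ _ _ _ K0 c0 hv hu hw).
Qed.

Lemma ext_op {R : realType} {X1 : normedModType R[i]} {X2 : completeNormedModType R[i]}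
  (dA : set X1) (A : X1 -> X1) (dC : set X1) (C : X1 -> X2) (cA : R) :
  lin_op dA A -> lin_op dC C -> dA `<=` dC -> 0 <= cA ->
  (forall x, dA x -> nr (C x) <= cA * nr (A x)) -> closure (A @` dA) = setT ->
  (forall x x', dA x -> dA x' -> A x = A x' -> C x = C x') /\
  exists G : X1 -> X2, [/\ bounded_lin G, (forall x, dA x -> G (A x) = C x) &
    forall G', bounded_lin G' -> (forall x, dA x -> G' (A x) = C x) -> G' = G].
Proof.
move=> [hSA hA] [hSC hC] sAC cA0 hCr hcl.
have wd : forall x x', dA x -> dA x' -> A x = A x' -> C x = C x'.
  move=> x x' dx dx' e.
  have dz := sub_sub hSA dx dx'.
  have := hCr _ dz; rewrite (lin_sub hA dx dx') e subrr nr0 mulr0 => h.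
  have : nr (C (x - x')) = 0 by apply/le_anti; rewrite h nr_ge0.
  move/nr_eq0; rewrite (lin_sub hC (sAC _ dx) (sAC _ dx')) => /eqP; rewrite subr_eq0 => /eqP //.
split => //.
pose f := fun y => C (get [set x | dA x /\ A x = y]).
have fA : forall x, dA x -> f (A x) = C x.
  move=> x dx; have := @getPex _ [set z | dA z /\ A z = A x] (ex_intro _ x (conj dx erefl)).
  move=> [dg eg]; exact: wd.
have hS : Defs.subspace (A @` dA).
  split; first by exists 0 => //; [exact: hSA.1 | exact: lin0 hSA hA].
  move=> a _ _ [x dx <-] [x' dx' <-]; exists (a *: x + x'); first exact: hSA.2.
  exact: hA.
have hf : linear_on (A @` dA) f.
  move=> a _ _ [x dx <-] [x' dx' <-].
  rewrite -hA // fA; last exact: hSA.2.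
  rewrite !fA //; exact: hC (sAC _ dx) (sAC _ dx').
have hb : forall y, (A @` dA) y -> nr (f y) <= cA * nr y.
  by move=> _ [x dx <-]; rewrite fA //; exact: hCr.
have [G [hG GS Gu]] := extension _ _ _ _ _ _ hS hcl hf cA0 hb.
exists G; split => //.
  by move=> x dx; rewrite GS ?fA //; exists x.
move=> G' hG' G'A; apply: Gu => // _ [x dx <-]; by rewrite G'A // fA.
Qed.
Theorem proposition4p4 (R : realType) (X1 X2 : completeNormedModType R[i])
  (dA : set X1) (A : X1 -> X1) (dD : set X2) (D : X2 -> X2)
  (dB : set X2) (B : X2 -> X1) (dC : set X1) (C : X1 -> X2) (cA cD : R) :
  lin_op dA A -> closed_op dA A -> densely_defined dA ->
  lin_op dD D -> closed_op dD D -> densely_defined dD ->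
  lin_op dB B -> lin_op dC C ->
  dD `<=` dB -> dA `<=` dC ->
  0 <= cA -> 0 <= cD ->
  (forall x, dA x -> `|C x| <= cA%:C * `|A x|) ->
  (forall y, dD y -> `|B y| <= cD%:C * `|D y|) ->
  dense_range dA A -> dense_range dD D ->
  let estimate :=
    exists c : R, forall (x1 : X1) (x2 : X2), dA x1 -> dD x2 ->
      `|((A x1, D x2) : (X1 * X2)%type)|
        <= c%:C * `|((A x1 + B x2, C x1 + D x2) : (X1 * X2)%type)| in
  [/\ (* C A^{-1} : R(A) -> X2, Ax |-> Cx, and
         B D^{-1} : R(D) -> X1, Dy |-> By, are well defined *)
      ((forall x x', dA x -> dA x' -> A x = A x' -> C x = C x') /\
       (forall y y', dD y -> dD y' -> D y = D y' -> B y = B y')),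
      (* unique bounded extension G of C A^{-1} *)
      (exists G : X1 -> X2, [/\ bounded_lin G, (forall x, dA x -> G (A x) = C x) &
         forall G' : X1 -> X2, bounded_lin G' ->
           (forall x, dA x -> G' (A x) = C x) -> G' = G]),
      (* unique bounded extension H of B D^{-1} *)
      (exists H : X2 -> X1, [/\ bounded_lin H, (forall y, dD y -> H (D y) = B y) &
         forall H' : X2 -> X1, bounded_lin H' ->
           (forall y, dD y -> H' (D y) = B y) -> H' = H]),
      (* main estimate *)
      (forall (G : X1 -> X2) (H : X2 -> X1),
         bounded_lin G -> (forall x, dA x -> G (A x) = C x) ->
         bounded_lin H -> (forall y, dD y -> H (D y) = B y) ->
         boundedly_invertible (fun x : X1 => x - H (G x)) \/
         boundedly_invertible (fun y : X2 => y - G (H y)) ->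
         estimate) &
      (* sectorial case *)
      (sectorial dA A -> sectorial dD D ->
       (exists eps : R, 0 < eps /\
         ((exists q : R, q < 1 /\
            forall t : R, 0 < t < eps ->
            forall (RA : X1 -> X1) (RD : X2 -> X2),
              is_bounded_inverse dA (fun x => t%:C *: x + A x) RA ->
              is_bounded_inverse dD (fun y => t%:C *: y + D y) RD ->
              forall x : X1, `|B (RD (C (RA x)))| <= q%:C * `|x|) \/
          (exists q : R, q < 1 /\
            forall t : R, 0 < t < eps ->
            forall (RA : X1 -> X1) (RD : X2 -> X2),
              is_bounded_inverse dA (fun x => t%:C *: x + A x) RA ->
              is_bounded_inverse dD (fun y => t%:C *: y + D y) RD ->
              forall y : X2, `|C (RA (B (RD y)))| <= q%:C * `|y|))) ->
       estimate)].
Proof.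
move=> lA clA ddA lD clD ddD lB lC sDB sAC cA0 cD0 hCb hBb drA drD estimate.
have hCr : forall x, dA x -> nr (C x) <= cA * nr (A x).
  by move=> x dx; have := hCb x dx; rewrite !normE -rmorphM lecR.
have hBr : forall y, dD y -> nr (B y) <= cD * nr (D y).
  by move=> y dy; have := hBb y dy; rewrite !normE -rmorphM lecR.
have [wdC exG] := ext_op _ _ _ _ _ lA lC sAC cA0 hCr drA.
have [wdB exH] := ext_op _ _ _ _ _ lD lB sDB cD0 hBr drD.
split => //.
- move=> G H hG hGA hH hHD [inv|inv].
  + have [K [K0 hK]] := p4 G H hG hH inv.
    have [MG [MG0 hMG]] := bl_real' _ hG.
    exists (K + 1 + MG * K) => x1 x2 d1 d2; apply: est_conv.
    have := hK (A x1) (D x2); rewrite hHD // hGA // => hu.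
    apply: (@finish _ _ _ _ _ _ _ (C x1) _ _ K0 MG0 hu); first by rewrite vec2.
    by rewrite -hGA //; exact: hMG.
  + have [K [K0 hK]] := p4 H G hH hG inv.
    have [MH [MH0 hMH]] := bl_real' _ hH.
    exists (K + 1 + MH * K) => x1 x2 d1 d2; apply: est_conv.
    have := hK (D x2) (A x1); rewrite hHD // hGA // [D x2 + _]addrC [B x2 + _]addrC => hv.
    apply: (@finish' _ _ _ _ _ _ _ (B x2) _ _ K0 MH0 hv); first by rewrite addrK.
    by rewrite -hHD //; exact: hMH.
- move=> secA secD [eps [e0 [[q0 [q1 hK]] | [q0 [q1 hK]]]]].
  + have [MA [MA0 hRA]] := resolvent _ _ lA secA.
    have [MD [MD0 hRD]] := resolvent _ _ lD secD.
    have hRA' : forall t : R, 0 < t -> exists RA, is_bounded_inverse dA (fun x => t%:C *: x + A x) RA.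
      by move=> t t0; have [RA [h _]] := hRA t t0; exists RA.
    have hK' : forall t : R, 0 < t < eps -> forall RA RD,
        is_bounded_inverse dA (fun x => t%:C *: x + A x) RA ->
        is_bounded_inverse dD (fun y => t%:C *: y + D y) RD ->
        forall x, nr (B (RD (C (RA x)))) <= q0 * nr x.
      by move=> t ht RA RD h1 h2 x; have := hK t ht RA RD h1 h2 x; rewrite !normE -rmorphM lecR.
    have [K [K0 hK2]] := p5 _ _ _ _ _ _ _ _ _ _ _ _ lA lD lB lC sDB sAC cD0 MD0 hBr hRA' hRD e0 q1 hK'.
    exists (K + 1 + cA * K) => x1 x2 d1 d2; apply: est_conv.
    apply: (@finish _ _ _ _ _ _ _ (C x1) _ _ K0 cA0 (hK2 _ _ d1 d2)); first by rewrite vec2.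
    exact: hCr.
  + have [MA [MA0 hRA]] := resolvent _ _ lA secA.
    have [MD [MD0 hRD]] := resolvent _ _ lD secD.
    have hRD' : forall t : R, 0 < t -> exists RD, is_bounded_inverse dD (fun x => t%:C *: x + D x) RD.
      by move=> t t0; have [RD [h _]] := hRD t t0; exists RD.
    have hK' : forall t : R, 0 < t < eps -> forall RD RA,
        is_bounded_inverse dD (fun x => t%:C *: x + D x) RD ->
        is_bounded_inverse dA (fun y => t%:C *: y + A y) RA ->
        forall y, nr (C (RA (B (RD y)))) <= q0 * nr y.
      by move=> t ht RD RA h1 h2 y; have := hK t ht RA RD h2 h1 y; rewrite !normE -rmorphM lecR.
    have [K [K0 hK2]] := p5 _ _ _ _ _ _ _ _ _ _ _ _ lD lA lC lB sAC sDB cA0 MA0 hCr hRD' hRA e0 q1 hK'.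
    exists (K + 1 + cD * K) => x1 x2 d1 d2; apply: est_conv.
    have := hK2 _ _ d2 d1; rewrite [D x2 + _]addrC [B x2 + _]addrC => hv.
    apply: (@finish' _ _ _ _ _ _ _ (B x2) _ _ K0 cD0 hv); first by rewrite addrK.
    exact: hBr.
Qed.
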